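(* For $n\in\mathbb{N}$, $q>0$ and $M_n\in\{0,1,\dots,n-1\}$, $$\mathcal{P}_n^q(\mathcal{S}(n,M_n))=\begin{cases} q\,\dfrac{M_n}{n}\Big(\dfrac{n!}{M_n!}\,\dfrac{1}{\prod_{l=M_n}^{n-1}(l+q)}\Big)\displaystyle\sum_{j=M_n}^{n-1}\frac1j, & M_n\in\{1,\dots,n-1\};\\[2ex] \dfrac{(n-1)!}{\prod_{l=1}^{n-1}(l+q)}, & M_n=0.\end{cases}$$
   Context: For $n\in\mathbb{N}$ and $q>0$, $P_n^{\mathrm{LR}^-;q}$ is the probability measure on $S_n$ given by $P_n^{\mathrm{LR}^-;q}(\sigma)=q^{\mathrm{LR}^-_n(\sigma)}/(q(q+1)\cdots(q+n-1))$, where $\mathrm{LR}^-_n(\sigma)=|\{j\in[n]:\sigma_j=\min\{\sigma_i:1\le i\le j\}\}|$ is the number of left-to-right minima of $\sigma$. Secretary problem setting: $n$ items with ranks $1,\dots,n$ (rank $1$ is the highest) arrive one at a time; $\sigma=\sigma_1\cdots\sigma_n\in S_n$ means the $j$th arriving item has rank $\sigma_j$, and $\sigma$ is random with law $P_n^{\mathrm{LR}^-;q}$. The observer only sees relative ranks of items arrived so far and must select or irrevocably reject each item; the last item must be accepted if reached. For $M_n\in\{0,\dots,n-1\}$, the strategy $\mathcal{S}(n,M_n)$ rejects the first $M_n$ items and then selects the first later item ranked higher than all of the first $M_n$ items (if no such item exists, the last item is taken); $\mathcal{S}(n,0)$ selects the first item. $\mathcal{P}_n^{q}(\mathcal{S}(n,M_n))$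 is the probability under $P_n^{\mathrm{LR}^-;q}$ that $\mathcal{S}(n,M_n)$ selects the item of rank $1$. *)

(* Defs.v *)
From HB Require Import structures.
From mathcomp Require Import all_boot all_order all_fingroup all_algebra.
Set Implicit Arguments. Unset Strict Implicit. Unset Printing Implicit Defensive.
Import Order.TTheory GRing.Theory Num.Theory.

(* Conventions: positions 1..n are encoded as j : 'I_n (position j+1),
   ranks 1..n as values of s : 'S_n (rank r encoded as r-1); so the item of
   rank 1 is the one with value 0. *)

Definition LRmin n (s : 'S_n) : nat :=
  #|[set j : 'I_n | [forall i : 'I_n, (i <= j)%N ==> (s j <= s i)%N]]|.

Definition PLR (R : realFieldType) n (q : R) (s : 'S_n) : R :=
  q ^+ LRmin s / \prod_(i < n) (q + i%:R).

Definition beats_first n (M : nat) (s : 'S_n) (j : 'I_n) : bool :=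
  [forall i : 'I_n, (i < M)%N ==> (s j < s i)%N].

Definition sel_pos n (M : nat) (s : 'S_n) : nat :=
  if M == 0%N then 0%N
  else head n.-1
         [seq val j | j <- [seq j : 'I_n <- enum 'I_n | (M <= j)%N && beats_first M s j]].

Definition success n (M : nat) (s : 'S_n) : bool :=
  [exists j : 'I_n, (val j == sel_pos M s) && (val (s j) == 0%N)].

Definition succ_prob (R : realFieldType) n (q : R) (M : nat) : R :=
  \sum_(s : 'S_n | success M s) PLR q s.

(* Main.v *)
Require Import Defs.
From HB Require Import structures.
From mathcomp Require Import all_boot all_order all_fingroup all_algebra.
From mathcomp Require Import zify ring lra.
Import Order.TTheory GRing.Theory Num.Theory.
Set Implicit Arguments. Unset Strict Implicit. Unset Printing Implicit Defensive.
Local Open Scope ring_scope.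

Definition isLR n (s : 'S_n) (j : 'I_n) : bool :=
  [forall i : 'I_n, (i <= j)%N ==> (s j <= s i)%N].

Definition dec (v x : nat) : nat := (x - (v < x))%N.

Lemma dec_inj v x y : x <> v -> y <> v -> dec v x = dec v y -> x = y.
Proof. rewrite /dec; case: ltnP => hx; case: ltnP => hy /=; lia. Qed.

Lemma dec_le v x y : x <> v -> y <> v -> (dec v x <= dec v y)%N = (x <= y)%N.
Proof. rewrite /dec; case: ltnP => hx; case: ltnP => hy /=; lia. Qed.

Notation wd j := (widen_ord (leqnSn _) j).

Lemma wd_neq n (s : 'S_n.+1) (j : 'I_n) : (s (wd j) : nat) <> s ord_max.
Proof.
move=> /val_inj /perm_inj /(congr1 val) /=. have := ltn_ord j. lia.
Qed.

Arguments wd_neq : clear implicits.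
Definition stdf n (s : 'S_n.+1) (j : 'I_n) : 'I_n :=
  insubd j (dec (s ord_max) (s (wd j))).

Lemma stdf_val n (s : 'S_n.+1) j : val (stdf s j) = dec (s ord_max) (s (wd j)).
Proof.
rewrite /stdf insubdK // /dec.
have h1 := wd_neq _ s j. have h2 := ltn_ord (s (wd j)). have h3 := ltn_ord (s ord_max).
case: ltnP => h /=; lia.
Qed.

Lemma stdf_inj n (s : 'S_n.+1) : injective (stdf s).
Proof.
move=> j k /(congr1 val); rewrite !stdf_val => /dec_inj.
move=> /(_ (wd_neq _ s j) (wd_neq _ s k)) /val_inj /perm_inj /(congr1 val) /= h.
exact: val_inj.
Qed.

Definition std n (s : 'S_n.+1) : 'S_n := perm (@stdf_inj n s).

Lemma std_val n (s : 'S_n.+1) j : val (std s j) = dec (s ord_max) (s (wd j)).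
Proof. by rewrite /std permE stdf_val. Qed.

Lemma isLR_std n (s : 'S_n.+1) (j : 'I_n) : isLR s (wd j) = isLR (std s) j.
Proof.
apply/forallP/forallP => /= h i.
  apply/implyP => hij. have := h (wd i). rewrite /= hij /= !std_val.
  rewrite dec_le //; exact: wd_neq.
apply/implyP => hij.
have hi : (i < n)%N by have := ltn_ord j; rewrite /= in hij *; lia.
have ei : wd (Ordinal hi) = i by apply: val_inj.
rewrite -ei. have := h (Ordinal hi). rewrite -ei /= in hij. rewrite hij /= !std_val.
rewrite dec_le //; exact: wd_neq.
Qed.

Lemma isLR_max n (s : 'S_n.+1) : isLR s ord_max = (val (s ord_max) == 0%N).
Proof.
apply/forallP/eqP => [h | h i].
  have := h ((perm_inv s) ord0). rewrite -ltnS ltn_ord /= permKV /=. lia.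
by rewrite h leq0n implybT.
Qed.

Definition phi n (s : 'S_n.+1) : 'S_n * 'I_n.+1 := (std s, s ord_max).

Lemma phi_inj n : injective (@phi n).
Proof.
move=> s t [] e1 e2. apply/permP => k.
have := ltn_ord k; rewrite ltnS leq_eqVlt => /orP [/eqP hk| hk].
  by have -> : k = ord_max by apply: val_inj.
have -> : k = wd (Ordinal hk) by apply: val_inj.
have := congr1 (fun p : 'S_n => val (p (Ordinal hk))) e1.
rewrite /= !std_val e2 => /dec_inj h. apply: val_inj; apply: h.
  by rewrite -e2 => e; apply: (wd_neq _ s (Ordinal hk)); rewrite e.
by move=> e; apply: (wd_neq _ t (Ordinal hk)); rewrite e.
Qed.

Lemma phi_bij n : bijective (@phi n).
Proof.
apply: inj_card_bij; first exact: phi_inj.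
by rewrite card_prod !card_Sn card_ord factS mulnC.
Qed.

Lemma keylemma (R : comRingType) n (a b : nat -> R) :
  \sum_(s : 'S_n) \prod_(j < n) (if isLR s j then a j else b j)
  = \prod_(j < n) (a j + j%:R * b j).
Proof.
elim: n => [|n IH].
  rewrite big_ord0 (eq_bigr (fun _ => 1)); last by move=> s _; rewrite big_ord0.
  by rewrite sumr_const card_Sn.
rewrite big_ord_recr -IH /= mulr_suml.
have [g phiK gK] := phi_bij n.
rewrite (reindex g); last by exists (@phi n) => x _; [exact: gK | exact: phiK].
rewrite (eq_bigr (fun p => (\prod_(j < n) (if isLR p.1 j then a j else b j))
   * (if val p.2 == 0%N then a n else b n))); last first.
  move=> p _; rewrite big_ord_recr /= isLR_max.
  under eq_bigr do rewrite isLR_std.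
  by rewrite -[in RHS](gK p).
rewrite -(pair_big predT predT (fun t (v : 'I_n.+1) =>
   (\prod_(j < n) (if isLR t j then a j else b j))
   * (if val v == 0%N then a n else b n))) /=.
apply: eq_bigr => t _.
rewrite -mulr_sumr; congr (_ * _).
rewrite big_ord_recl /=. congr (_ + _).
rewrite (eq_bigr (fun _ => b n)) // sumr_const card_ord.
by rewrite mulr_natl.
Qed.

Lemma head_none n (P : pred 'I_n) d :
  (forall j, ~~ P j) -> head d [seq val j | j <- filter P (enum 'I_n)] = d.
Proof. by move=> h; rewrite (@eq_filter _ P pred0) ?filter_pred0 // => j; apply/negbTE. Qed.

Lemma sorted_ord n : sorted (relpre val ltn) (enum 'I_n).
Proof. by rewrite -sorted_map val_enum_ord iota_ltn_sorted. Qed.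

Lemma head_some n (P : pred 'I_n) d j : P j ->
  exists p : 'I_n, [/\ head d [seq val j | j <- filter P (enum 'I_n)] = val p,
     P p & forall k, P k -> (p <= k)%N].
Proof.
move=> Pj.
have tr : transitive (relpre (@nat_of_ord n) ltn).
  by move=> x y z /= h1 h2; apply: ltn_trans h1 h2.
have := sorted_filter tr P (sorted_ord n).
have : j \in filter P (enum 'I_n) by rewrite mem_filter Pj mem_enum.
case: (filter P (enum 'I_n)) (mem_filter P^~ (enum 'I_n)) => [//|x l] hm _ /= hs.
have Px : P x by have := hm x; rewrite inE eqxx mem_enum andbT /= => /esym.
exists x; split => // k Pk.
have : k \in x :: l by rewrite hm Pk mem_enum.
rewrite inE => /orP [/eqP -> //|kl].
have := order_path_min tr hs => /allP /(_ k kl) /=. exact: ltnW.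
Qed.

Lemma success_iff n M (s : 'S_n) : (M < n)%N ->
  success M s = (#|[set j | isLR s j & (M <= j)%N]| == 1%N).
Proof.
move=> hM.
have hn : (0 < n)%N by lia.
set z0 : 'I_n := Ordinal hn.
set z : 'I_n := (s^-1)%g z0.
have sz : s z = z0 by rewrite /z permKV.
have sj0 j : (val (s j) == 0%N) = (j == z).
  apply/eqP/eqP => [h|->]; last by rewrite sz.
  by apply: (@perm_inj _ s); rewrite sz; apply: val_inj.
have F1 : isLR s z by apply/forallP => i; rewrite sz /= leq0n implybT.
have F2 j : isLR s j -> (z <= j)%N -> j = z.
  move=> /forallP /(_ z) /implyP h /h; rewrite sz /= leqn0.
  by rewrite sj0 => /eqP.
have LRz0 : isLR s z0.
  apply/forallP => i; apply/implyP; rewrite /= leqn0 => /eqP h.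
  by have -> : i = z0 by apply: val_inj.
have succE : success M s = (val z == sel_pos M s).
  apply/existsP/eqP => [[j /andP [/eqP hj]]|h].
    by rewrite sj0 => /eqP <-.
  by exists z; rewrite -h eqxx sj0 eqxx.
rewrite succE /sel_pos.
case: (M =P 0%N) => [M0|MP].
  subst M.
  apply/eqP/eqP => [hz|].
    apply/eqP/cards1P; exists z; apply/setP => j; rewrite !inE /= andbT.
    apply/idP/eqP => [hj|->//]. apply: (F2 j hj). by rewrite hz.
  move/eqP/cards1P => [x hx].
  have : z \in [set x] by rewrite -hx inE F1 leq0n.
  have : z0 \in [set x] by rewrite -hx inE LRz0 leq0n.
  by rewrite !inE => /eqP h1 /eqP h2; rewrite h2 -h1.
have sinj j i : (s j == s i) = (j == i).
  by apply/eqP/eqP => [/perm_inj|->].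
case: (ltnP z M) => zM.
  rewrite head_none; last first.
    move=> j; apply/negP => /andP [_ /forallP /(_ z)].
    by rewrite zM /= sz.
  have -> : #|[set j | isLR s j & (M <= j)%N]| = 0%N.
    apply/eqP; rewrite cards_eq0; apply/eqP/setP => j; rewrite !inE.
    apply/negP => /andP [hj hMj].
    case: (leqP z j) => zj; last by lia.
    have ejz := F2 j hj zj. move: zM; rewrite -ejz; lia.
  apply/negbTE/eqP; rewrite -subn1 /= => h. lia.
have Pz : (M <= z)%N && beats_first M s z.
  rewrite zM /=; apply/forallP => i; apply/implyP => iM.
  rewrite sz /= lt0n sj0. apply/eqP => iz. by move: zM; rewrite -iz; lia.
have [p [-> /andP [Mp bp] pmin]] := head_some (P := fun j : 'I_n => (M <= j)%N && beats_first M s j) n.-1 Pz.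
have LRbeat j : isLR s j -> (M <= j)%N -> beats_first M s j.
  move=> /forallP hj Mj; apply/forallP => i; apply/implyP => iM.
  have := hj i; rewrite (leq_trans (ltnW iM) Mj) /= ltn_neqAle => ->.
  by rewrite andbT; apply/negP => /eqP /val_inj /perm_inj ji; move: iM; rewrite -ji /=; lia.
have LRp : isLR s p.
  apply/forallP => i; apply/implyP => ip.
  case: (ltnP i M) => iM.
    by have := (forallP bp) i; rewrite iM /= => /ltnW.
  case: (i =P p) => [->//|nip].
  have : ~~ beats_first M s i.
    apply/negP => bi. have := pmin i; rewrite iM bi /= => /(_ isT) pi.
    by apply: nip; apply: val_inj => /=; lia.
  move/forallPn => [i0]; rewrite negb_imply -leqNgt => /andP [i0M si0].
  have := (forallP bp) i0; rewrite i0M /= => h. lia.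
apply/eqP/eqP => [/val_inj zp|].
  apply/eqP/cards1P; exists z; apply/setP => j; rewrite !inE.
  apply/andP/eqP => [[hj Mj]|->]; last by [].
  apply: (F2 j hj). rewrite zp. apply: pmin. by rewrite Mj LRbeat.
move/eqP/cards1P => [x hx].
have : z \in [set x] by rewrite -hx inE F1 zM.
have : p \in [set x] by rewrite -hx inE LRp Mp.
by rewrite !inE => /eqP h1 /eqP h2; rewrite h2 -h1.
Qed.

Definition w (R : ringType) (q : R) (M m j : nat) (x : bool) : R :=
  if j == m then (if x then q else 0)
  else if (j < M)%N then (if x then q else 1) else (if x then 0 else 1).

Lemma weight_prod (R : comRingType) n (q : R) M (A : {set 'I_n}) (m : 'I_n) :
  (M <= m)%N ->
  \prod_(j < n) w q M m j (j \in A)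
  = if A :&: [set j : 'I_n | (M <= j)%N] == [set m] then q ^+ #|A| else 0.
Proof.
move=> Mm.
case: ifP => [/eqP hB|hB].
  rewrite (eq_bigr (fun j => if j \in A then q else 1)); last first.
    move=> j _; rewrite /w.
    case: (val j =P val m) => [/val_inj ->|jm].
      have : m \in A :&: [set j : 'I_n | (M <= j)%N] by rewrite hB inE.
      by rewrite !inE => /andP [-> _].
    case: ifP => // jM. case jA: (j \in A) => //.
    have : j \in A :&: [set j : 'I_n | (M <= j)%N] by rewrite !inE jA /= leqNgt jM.
    by rewrite hB inE => /eqP ej; case: jm; rewrite ej.
  by rewrite -big_mkcond /= prodr_const.
case: (boolP (m \in A)) => mA; last first.
  rewrite (bigD1 m) //= /w eqxx (negbTE mA). by rewrite mul0r.
case: (boolP [exists j : 'I_n, (j \in A :&: [set j : 'I_n | (M <= j)%N]) != (j == m)]).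
  move/existsP => [j]. rewrite !inE.
  case: (j =P m) => [->|jm]; first by rewrite mA Mm.
  case jA: (j \in A); rewrite /= ?andbF //= => Mj.
  rewrite (bigD1 j) //= /w.
  have -> : (val j == val m) = false by apply/eqP => /val_inj.
  by rewrite jA ltnNge; move: Mj; case: (M <= j)%N => //= _; rewrite mul0r.
move=> h; exfalso; move/negbT: hB => /negP; apply; apply/eqP/setP => j.
by move/existsPn: h => /(_ j); rewrite negbK => /eqP ->; rewrite inE.
Qed.

Lemma sum_single (R : comRingType) n M (B : {set 'I_n}) (c : R) :
  B \subset [set j : 'I_n | (M <= j)%N] ->
  \sum_(m : 'I_n | (M <= m)%N) (if B == [set m] then c else 0)
  = if #|B| == 1%N then c else 0.
Proof.
move=> sB.
case: ifP => [/cards1P [x hx]|hB].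
  have Mx : (M <= x)%N.
    by have := subsetP sB x; rewrite hx !inE eqxx => /(_ isT).
  rewrite (bigD1 x) //= hx eqxx big1 ?addr0 // => m /andP [_ mx].
  case: eqP => // /setP /(_ x); rewrite !inE eqxx => /esym /eqP xm.
  by move: mx; rewrite xm eqxx.
rewrite big1 // => m _; case: eqP => // hm.
by move: hB; rewrite hm cards1 eqxx.
Qed.

Lemma prob_sum (R : realFieldType) n (q : R) M : (M < n)%N ->
  succ_prob n q M =
  (\sum_(m : 'I_n | (M <= m)%N)
      \prod_(j < n) (w q M m j true + j%:R * w q M m j false))
  / \prod_(i < n) (q + i%:R).
Proof.
move=> hM.
rewrite /succ_prob /PLR -big_distrl /=; congr (_ * _).
rewrite big_mkcond /=.
rewrite (eq_bigr (fun s : 'S_n => \sum_(m : 'I_n | (M <= m)%N)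
           \prod_(j < n) (if isLR s j then w q M m j true else w q M m j false))).
  rewrite exchange_big /=; apply: eq_bigr => m _.
  exact: (keylemma n (fun j => w q M m j true) (fun j => w q M m j false)).
move=> s _.
set A := [set j | isLR s j].
rewrite (eq_bigr (fun m : 'I_n => if A :&: [set j : 'I_n | (M <= j)%N] == [set m]
                                  then q ^+ #|A| else 0)); last first.
  move=> m Mm; rewrite -weight_prod //; apply: eq_bigr => j _.
  by rewrite /A inE; case: isLR.
rewrite sum_single; last by apply/subsetP => j; rewrite !inE => /andP [].
rewrite success_iff //.
have -> : A :&: [set j : 'I_n | (M <= j)%N] = [set j | isLR s j & (M <= j)%N].
  by apply/setP => j; rewrite !inE.
by [].
Qed.

Lemma fact_split M k : (M`! * \prod_(M <= j < M + k) j.+1 = (M + k)`!)%N.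
Proof.
elim: k => [|k IH]; first by rewrite addn0 big_geq // muln1.
by rewrite addnS big_nat_recr ?leq_addr //= mulnA IH factS mulnC.
Qed.

Lemma prod_shift M k :
  ((\prod_(M <= j < M + k) j) * (M + k) = M * \prod_(M <= j < M + k) j.+1)%N.
Proof.
elim: k => [|k IH]; first by rewrite addn0 !big_geq // mul1n muln1.
rewrite addnS !big_nat_recr ?leq_addr //=.
by rewrite IH -mulnA.
Qed.

Definition cc (R : ringType) (q : R) (M m j : nat) : R :=
  if j == m then q else if (j < M)%N then q + j%:R else j%:R.

Lemma ccE (R : comRingType) (q : R) M m j :
  w q M m j true + j%:R * w q M m j false = cc q M m j.
Proof. rewrite /w /cc; case: (j == m); case: (j < M)%N; by rewrite /= ?mulr0 ?mulr1 ?addr0 ?add0r. Qed.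

Lemma prod_pick (R : comRingType) (q : R) a b m : (a <= m < b)%N ->
  (\prod_(a <= j < b) (if j == m then q else j%:R)) * m%:R
  = q * \prod_(a <= j < b) j%:R.
Proof.
move=> hm.
rewrite !(bigD1_seq m) ?mem_index_iota ?iota_uniq //= eqxx.
rewrite (eq_bigr (fun j => j%:R)); last by move=> j /negbTE ->.
by rewrite -mulrA (mulrC _ (m%:R)).
Qed.

Lemma qj_neq0 (R : realFieldType) (q : R) j : 0 < q -> q + j%:R != 0.
Proof. move=> hq; have h := ler0n R j; rewrite gt_eqF //; lra. Qed.

Lemma Pq_neq0 (R : realFieldType) (q : R) a b : 0 < q ->
  \prod_(a <= j < b) (q + j%:R) != 0.
Proof. move=> hq; rewrite prodf_seq_neq0; apply/allP => j _; exact: qj_neq0. Qed.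

Unset Implicit Arguments.
Set Strict Implicit.

Theorem theorem1p2 (R : realFieldType) (n M : nat) (q : R) :
  0 < q -> (M < n)%N ->
  succ_prob n q M =
  (if M == 0%N then
     (n.-1)`!%:R / \prod_(1 <= l < n) (l%:R + q)
   else
     q * (M%:R / n%:R)
       * (n`!%:R / M`!%:R / \prod_(M <= l < n) (l%:R + q))
       * \sum_(M <= j < n) (j%:R)^-1).
Proof.
move=> hq hM.
have hn : (0 < n)%N by lia.
rewrite prob_sum //.
have sumE : \sum_(m < n | (M <= m)%N)
      \prod_(j < n) (w q M m j true + j%:R * w q M m j false)
    = \sum_(M <= m < n) \prod_(0 <= j < n) cc q M m j.
  rewrite big_geq_mkord; apply: eq_big => // m _.
  by rewrite big_mkord; apply: eq_bigr => j _; rewrite ccE.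
have DE : \prod_(i < n) (q + i%:R) = \prod_(0 <= i < n) (q + i%:R) by rewrite big_mkord.
have sw a : \prod_(a <= l < n) (l%:R + q) = \prod_(a <= l < n) (q + l%:R).
  by apply: eq_bigr => l _; rewrite addrC.
rewrite sumE DE !sw.
case: (M =P 0%N) => [M0|MP].
  subst M => /=.
  rewrite (big_ltn hn) [X in _ + X]big_nat_cond [X in _ + X]big1; last first.
    move=> m /andP [/andP [hm _] _].
    by rewrite (big_ltn hn) /cc /= (_ : (0 == m)%N = false) ?mul0r //; lia.
  rewrite addr0 (big_ltn hn) /cc eqxx.
  rewrite (eq_big_nat _ _ (F2 := fun j => j%:R)); last first.
    by move=> j /andP [hj _]; rewrite (_ : (j == 0)%N = false) //; lia.
  rewrite (big_ltn hn) addr0 fact_prod prednK // natr_prod.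
  have := Pq_neq0 1 n hq. have : q != 0 by rewrite gt_eqF.
  move=> h1 h2. field. by rewrite h1 h2.
have hMn : (M <= n)%N by lia.
set P0 := \prod_(0 <= j < M) (q + j%:R).
set Pj := \prod_(M <= j < n) (j%:R : R).
have e m : (M <= m < n)%N ->
    \prod_(0 <= j < n) cc q M m j = (P0 * q * Pj) * (m%:R)^-1.
  move=> hm.
  rewrite (big_cat_nat (n:=M)) //.
  rewrite (eq_big_nat _ _ (F2 := fun j => q + j%:R)); last first.
    move=> j /andP [_ hj]; rewrite /cc (_ : (j == m)%N = false) ?hj //; lia.
  rewrite (eq_big_nat _ _ (m := M) (n := n) (F2 := fun j => if j == m then q else j%:R)); last first.
    move=> j /andP [hj _]; rewrite /cc (_ : (j < M)%N = false) //; lia.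
  have mn0 : (m%:R : R) != 0 by rewrite pnatr_eq0; lia.
  rewrite -!mulrA; congr (_ * _); rewrite mulrA /Pj -(prod_pick q hm) mulfK //.
rewrite (eq_big_nat _ _ e) -big_distrr /=.
rewrite (big_cat_nat (n:=M) (m:=0) (p:=n)) //= -/P0.
have key : (Pj * (n%:R * M`!%:R) = M%:R * n`!%:R)%R.
  have := congr1 (fun x : nat => (x%:R : R)) (prod_shift M (n - M)).
  have := congr1 (fun x : nat => (x%:R : R)) (fact_split M (n - M)).
  rewrite subnKC // !natrM !natr_prod -/Pj => <- h.
  by rewrite mulrA h mulrAC -mulrA.
have P0n : P0 != 0 by apply: Pq_neq0.
have P1n := Pq_neq0 M n hq.
have nn : (n%:R : R) != 0 by rewrite pnatr_eq0; lia.
have Mf : (M`!%:R : R) != 0 by rewrite pnatr_eq0 -lt0n fact_gt0.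
have -> : Pj = M%:R * n`!%:R / (n%:R * M`!%:R).
  by rewrite -key mulfK // mulf_neq0.
field.
by rewrite P0n P1n nn Mf.
Qed.
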